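(* Let $d\ge2$, $n\ge1$, $N=nd$, $F\in[0,1)$ with $F\ne 2^{-N}$, and $c=F-\frac{1-F}{2^N-1}$. Let $\rho_0$ be the $N$-qubit depolarized GHZ state with fidelity $F$, $\rho_x=U(x)\rho_0U(x)^\dagger$, and for $\alpha\in\mathbb{R}$ let $M(\alpha)=O(\alpha)^{\otimes N}$ with $O(\alpha)=e^{i\alpha}|1\rangle\langle0|+e^{-i\alpha}|0\rangle\langle1|$. Define the error-propagation variance at $x=0$, $$V(\alpha)=\frac{\langle M(\alpha)^2\rangle-\langle M(\alpha)\rangle^2}{\big|v_1\cdot\nabla_x\langle M(\alpha)\rangle\big|^2}\Bigg|_{x=0},\qquad \langle A\rangle=\mathrm{Tr}(\rho_xA),\ v_1=\tfrac{1}{\sqrt d}(1,\dots,1)^T,$$ for those $\alpha$ where the denominator is nonzero. Then the denominator is nonzero exactly when $\sin(nd\alpha)\neq0$, in which case $$V(\alpha)=\frac{1-c^2\cos^2(nd\alpha)}{d\,n^2c^2\sin^2(nd\alpha)};$$ $V$ attains its minimum exactly at $\alpha=\frac{(2l+1)\pi}{2nd}$, $l\in\mathbb{Z}$, with minimum value $\frac{1}{d\,c^2\,n^2}$. Moreover, for every $F\in[0,1]$, $d\,c^2>1$ if and only if $$F>\frac{2^{nd}+\sqrt d-1}{2^{nd}\sqrt d}.$$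
   Context: Setting: $d$ nodes with $n$ qubits each, qubits labelled $(i,k)$; $U(x)=\exp[-i\sum_{i=0}^{d-1}x_iH_i]$ with $H_i=\frac12\sum_{k=0}^{n-1}\sigma_z^{(i,k)}$, $x\in\mathbb{R}^d$. The $N$-qubit depolarized GHZ state with fidelity $F$ is $F|\mathrm{GHZ}_N\rangle\langle\mathrm{GHZ}_N|+\frac{1-F}{2^N-1}(I-|\mathrm{GHZ}_N\rangle\langle\mathrm{GHZ}_N|)$, $|\mathrm{GHZ}_N\rangle=(|0\cdots0\rangle+|1\cdots1\rangle)/\sqrt2$. The parameter of interest is $\theta_1=v_1^Tx$; the directional derivative $v_1\cdot\nabla_x$ is the derivative with respect to $\theta_1$ at fixed values of the orthogonal complementary parameters. The value $1/(n^2)$ per sample is the variance of the optimal local (non-networked) strategy, so $dc^2>1$ means advantage over it. *)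

(* Defs.v *)
From HB Require Import structures.
From mathcomp Require Import all_boot all_order all_algebra.
From mathcomp Require Import complex.
From mathcomp Require Import all_classical all_reals all_analysis.

Set Implicit Arguments.
Unset Strict Implicit.
Unset Printing Implicit Defensive.

Import Order.TTheory GRing.Theory Num.Theory.
Local Open Scope ring_scope.
Local Open Scope complex_scope.

(* Qubits are labelled (i,k) with i : 'I_d (node), k : 'I_n (qubit in node).
   Computational basis states of the N = n d qubit register: bit strings
   b : {ffun qubit -> bool}, with false = |0>, true = |1>.
   An operator A is represented by its matrix elements A b b' = <b|A|b'>. *)
Definition qubit (d n : nat) := ('I_d * 'I_n)%type.
Definition cbasis (d n : nat) := {ffun qubit d n -> bool}.
Definition op (R : realType) (d n : nat) := cbasis d n -> cbasis d n -> R[i].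

Section Ops.
Variables (R : realType) (d n : nat).
Local Notation C := R[i].

Definition opmul (A B : op R d n) : op R d n :=
  fun b b' => \sum_(c : cbasis d n) A b c * B c b'.
Definition opadj (A : op R d n) : op R d n := fun b b' => conjc (A b' b).
Definition optr (A : op R d n) : C := \sum_(b : cbasis d n) A b b.
Definition opid : op R d n := fun b b' => (b == b')%:R.
Definition opadd (A B : op R d n) : op R d n := fun b b' => A b b' + B b b'.
Definition opscale (a : C) (A : op R d n) : op R d n := fun b b' => a * A b b'.

Definition expi (t : R) : C := Complex (cos t) (sin t).

Definition ghz_ket (b : cbasis d n) : C :=
  if (b == [ffun=> false]) || (b == [ffun=> true])
  then ((Num.sqrt 2)^-1)%:C else 0.
Definition ghz_proj : op R d n := fun b b' => ghz_ket b * conjc (ghz_ket b').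

Definition depol_ghz (F : R) : op R d n :=
  opadd (opscale F%:C ghz_proj)
        (opscale ((1 - F) / (2 ^+ (d * n) - 1))%:C
                 (opadd opid (opscale (-1) ghz_proj))).

(* eigenvalue of sigma_z on |0> (false) is +1, on |1> (true) is -1 *)
Definition sz (b : bool) : R := if b then -1 else 1.

(* U(x) = exp[-i sum_i x_i H_i], H_i = 1/2 sum_k sigma_z^{(i,k)} ; diagonal *)
Definition Uop (x : 'rV[R]_d) : op R d n :=
  fun b b' => (b == b')%:R *
    expi (- \sum_(q : qubit d n) x ord0 q.1 * (sz (b q) / 2)).

Definition rho (F : R) (x : 'rV[R]_d) : op R d n :=
  opmul (opmul (Uop x) (depol_ghz F)) (opadj (Uop x)).

(* O(alpha) = e^{i alpha}|1><0| + e^{-i alpha}|0><1| ; O a r c = <r|O|c> *)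
Definition Oq (a : R) (r c : bool) : C :=
  if r && ~~ c then expi a else if ~~ r && c then expi (- a) else 0.

Definition Mop (a : R) : op R d n :=
  fun b b' => \prod_(q : qubit d n) Oq a (b q) (b' q).

(* <A> = Tr(rho_x A) (a real number for Hermitian A; we take its real part) *)
Definition expect (F : R) (A : op R d n) (x : 'rV[R]_d) : R :=
  complex.Re (optr (opmul (rho F x) A)).

Definition v1 : 'rV[R]_d := const_mx (Num.sqrt d%:R)^-1.

Definition expM_line (F a : R) : R -> R :=
  fun t => expect F (Mop a) (t *: v1).

(* | v_1 . grad_x <M(alpha)> |^2 at x = 0 *)
Definition denomV (F a : R) : R := (derive1 (expM_line F a) 0) ^+ 2.

Definition Verr (F a : R) : R :=
  (expect F (opmul (Mop a) (Mop a)) 0 - (expect F (Mop a) 0) ^+ 2) / denomV F a.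

End Ops.

Definition cF (R : realType) (N : nat) (F : R) : R := F - (1 - F) / (2 ^+ N - 1).

(* Main.v *)
Require Import Defs.
From HB Require Import structures.
From mathcomp Require Import all_boot all_order all_algebra.
From mathcomp Require Import complex.
From mathcomp Require Import all_classical all_reals all_analysis.
From mathcomp Require Import ring lra.
Import Order.TTheory GRing.Theory Num.Theory.
Local Open Scope ring_scope.
Local Open Scope complex_scope.

Section S.
Variable R : realType.

Lemma expiD (s t : R) : expi s * expi t = expi (s + t).
Proof. by rewrite /expi /= cosD sinD; congr Complex; ring. Qed.

Lemma expiJ (t : R) : conjc (expi t) = expi (- t).
Proof. by rewrite /expi /= cosN sinN. Qed.

Lemma expi0 : expi (0:R) = 1.
Proof. by rewrite /expi cos0 sin0. Qed.

Lemma expiX (t : R) k : expi t ^+ k = expi (k%:R * t).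
Proof.
elim: k => [|k IH]; first by rewrite expr0 mul0r expi0.
by rewrite exprS IH expiD -{1}(mul1r t) -mulrDl -natr1 addrC.
Qed.

Lemma ReM_real (r : R) (z : R[i]) : complex.Re (r%:C * z) = r * complex.Re z.
Proof. by case: z => x y /=; ring. Qed.

Lemma Re_expi (t : R) : complex.Re (expi t) = cos t.
Proof. by []. Qed.

Lemma ReD' (z w : R[i]) : complex.Re (z + w) = complex.Re z + complex.Re w.
Proof. by case: z; case: w. Qed.

Lemma sum_two (T : finType) (f : T -> R[i]) (x y : T) : x != y ->
  (forall b, b != x -> b != y -> f b = 0) -> \sum_b f b = f x + f y.
Proof.
move=> xy H; rewrite (bigD1 x) //= (bigD1 y) /=; last by rewrite eq_sym.
rewrite big1 ?addr0 // => b /andP [bx b_y]; exact: H.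
Qed.

Variables (d n : nat) (d0 : (0 < d)%N) (n0 : (0 < n)%N).
Let q0 : qubit d n := (Ordinal d0, Ordinal n0).
Let z : cbasis d n := [ffun=> false].
Let o : cbasis d n := [ffun=> true].
Lemma zo : z != o.
Proof. apply/eqP => /(congr1 (fun f : cbasis d n => f q0)); rewrite !ffunE; done. Qed.

Definition uu (x : 'rV[R]_d) (b : cbasis d n) :=
  expi (- \sum_(q : qubit d n) x ord0 q.1 * (sz R (b q) / 2)).

Lemma mulU_l x (A : op R d n) b b' : opmul (Uop x) A b b' = uu x b * A b b'.
Proof.
rewrite /opmul (bigD1 b) //= big1 ?addr0; last first.
  by move=> c cb; rewrite /Uop eq_sym (negbTE cb) mul0r mul0r.
by rewrite /Uop eqxx mul1r.
Qed.

Lemma mulU_r x (A : op R d n) b b' : opmul A (opadj (Uop x)) b b' = A b b' * conjc (uu x b').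
Proof.
rewrite /opmul (bigD1 b') //= big1 ?addr0; last first.
  by move=> c cb; rewrite /opadj /Uop eq_sym (negbTE cb) mul0r conjc0 mulr0.
by rewrite /opadj /Uop eqxx mul1r.
Qed.

Lemma rhoE F x b b' : rho F x b b' = uu x b * depol_ghz F b b' * conjc (uu x b').
Proof. by rewrite /rho mulU_r mulU_l. Qed.

Lemma Mdiag a (b : cbasis d n) : Mop a b b = 0 :> R[i].
Proof.
rewrite /Mop (bigD1 q0) //=; suff -> : Oq a (b q0) (b q0) = 0 by rewrite mul0r.
by rewrite /Oq; case: (b q0).
Qed.


Definition cc (F : R) := F - (1 - F) / (2 ^+ (d * n) - 1).
Let s := (Num.sqrt (2:R))^-1.

Lemma ghzE (b : cbasis d n) : ghz_ket R b = if (b == z) || (b == o) then s%:C else 0.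
Proof. by []. Qed.

Lemma ss : s%:C * conjc (s%:C) = (2^-1 : R)%:C.
Proof. by rewrite conjc_real -rmorphM /s -invfM -expr2 sqr_sqrtr // ler0n. Qed.

Lemma Dzo F : depol_ghz F z o = (cc F / 2)%:C.
Proof.
rewrite /depol_ghz /opadd /opscale /ghz_proj /opid !ghzE !eqxx /= !orbT (negbTE zo) ss.
rewrite add0r mulN1r -rmorphN -!rmorphM -rmorphD; congr (_%:C); rewrite /cc; ring.
Qed.

Lemma Doz F : depol_ghz F o z = (cc F / 2)%:C.
Proof.
rewrite /depol_ghz /opadd /opscale /ghz_proj /opid !ghzE !eqxx /= !orbT eq_sym (negbTE zo) ss.
rewrite add0r mulN1r -rmorphN -!rmorphM -rmorphD; congr (_%:C); rewrite /cc; ring.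
Qed.

Lemma ghz_proj_off (b c : cbasis d n) : b != c -> (b, c) != (z, o) -> (b, c) != (o, z) ->
  ghz_proj R b c = 0.
Proof.
move=> bc h1 h2; rewrite /ghz_proj !ghzE.
have [eb|nb] := boolP ((b == z) || (b == o)); last by rewrite mul0r.
have [ec|nc] := boolP ((c == z) || (c == o)); last by rewrite conjc0 mulr0.
exfalso; move: eb ec h1 h2 bc.
by case/orP => /eqP -> /orP [] /eqP ->; rewrite ?eqxx.
Qed.

Lemma term0 (F a : R) (x : 'rV[R]_d) (b c : cbasis d n) : (b, c) != (z, o) -> (b, c) != (o, z) ->
  rho F x b c * Mop a c b = 0.
Proof.
move=> h1 h2; have [->|bc] := eqVneq b c; first by rewrite Mdiag mulr0.
rewrite rhoE /depol_ghz /opadd /opscale /opid (negbTE bc) ghz_proj_off //.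
by rewrite !(mulr0, mul0r, addr0, add0r).
Qed.

Lemma trE (F a : R) (x : 'rV[R]_d) : optr (opmul (rho F x) (Mop a) : op R d n) =
  rho F x z o * Mop a o z + rho F x o z * Mop a z o.
Proof.
rewrite /optr /opmul pair_bigA /=.
rewrite (@sum_two _ (fun p => rho F x p.1 p.2 * Mop a p.2 p.1) (z, o) (o, z)) //.
  by rewrite xpair_eqE negb_and zo.
by case=> b c; apply: term0.
Qed.


Lemma card_qubit : #|{: qubit d n}| = (d * n)%N.
Proof. by rewrite card_prod !card_ord. Qed.

Lemma Moz (a : R) : Mop a o z = expi ((d * n)%:R * a).
Proof.
rewrite /Mop (eq_bigr (fun _ => expi a)) => [|q _]; last by rewrite !ffunE.
by rewrite prodr_const card_qubit expiX.
Qed.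

Lemma Mzo (a : R) : Mop a z o = expi ((d * n)%:R * - a).
Proof.
rewrite /Mop (eq_bigr (fun _ => expi (- a))) => [|q _]; last by rewrite !ffunE.
by rewrite prodr_const card_qubit expiX.
Qed.

Definition SS (x : 'rV[R]_d) := \sum_(q : qubit d n) x ord0 q.1.

Lemma uuz (x : 'rV[R]_d) : uu x z = expi (- (SS x / 2)).
Proof.
rewrite /uu /SS big_distrl /=; congr (expi (- _)); apply: eq_bigr => q _.
by rewrite /z ffunE /sz mul1r.
Qed.

Lemma uuo (x : 'rV[R]_d) : uu x o = expi (SS x / 2).
Proof.
rewrite /uu /SS big_distrl /= -sumrN; congr expi; apply: eq_bigr => q _.
rewrite /o ffunE /sz; ring.
Qed.

Lemma e3 (p q r : R) (k : R[i]) : expi p * k * expi q * expi r = k * expi (p + q + r).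
Proof. rewrite -!expiD; ring. Qed.

Lemma expectM (F a : R) (x : 'rV[R]_d) :
  expect F (Mop a : op R d n) x = cc F * cos ((d * n)%:R * a - SS x).
Proof.
rewrite /expect trE !rhoE Dzo Doz Moz Mzo uuz uuo !expiJ !e3 ReD' !ReM_real !Re_expi.
have -> : - (SS x / 2) + - (SS x / 2) + (d * n)%:R * a = (d * n)%:R * a - SS x by field.
have -> : SS x / 2 + - - (SS x / 2) + (d * n)%:R * - a = - ((d * n)%:R * a - SS x) by field.
by rewrite cosN; field.
Qed.


Lemma Oq2 (a : R) r1 r2 : \sum_(r : bool) Oq a r1 r * Oq a r r2 = (r1 == r2)%:R.
Proof.
rewrite big_bool /Oq; case: r1; case: r2 => /=;
by rewrite ?mul0r ?mulr0 ?addr0 ?add0r ?expiD ?subrr ?addNr ?expi0.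
Qed.

Lemma MM (a : R) (b b' : cbasis d n) : opmul (Mop a) (Mop a) b b' = (b == b')%:R.
Proof.
rewrite /opmul /Mop.
under eq_bigr do rewrite -big_split /=.
rewrite -(bigA_distr_bigA (fun q r => Oq a (b q) r * Oq a r (b' q))).
under eq_bigr do rewrite Oq2.
have [->|ne] := eqVneq b b'; first by rewrite big1 // => q _; rewrite eqxx.
have : ~~ [forall q, b q == b' q].
  by apply: contra ne => /forallP h; apply/eqP/ffunP => q; apply/eqP/h.
rewrite negb_forall => /existsP [q hq].
by rewrite (bigD1 q) //= (negbTE hq) mul0r.
Qed.

Lemma card_cb : #|{: cbasis d n}| = (2 ^ (d * n))%N.
Proof. by rewrite card_ffun card_bool card_qubit. Qed.

Lemma expectMM (F a : R) : 2 ^+ (d * n) - 1 != 0 :> R ->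
  expect F (opmul (Mop a) (Mop a) : op R d n) 0 = 1.
Proof.
move=> hN.
rewrite /expect /optr.
have -> : \sum_(b : cbasis d n) opmul (rho F (0 : 'rV[R]_d)) (opmul (Mop a) (Mop a)) b b = \sum_(b : cbasis d n) depol_ghz F b b.
  apply: eq_bigr => b _.
  rewrite (_ : opmul _ _ b b = \sum_c rho F (0 : 'rV[R]_d) b c * (c == b)%:R); last first.
    by apply: eq_bigr => c _; rewrite MM.
  rewrite (bigD1 b) //= big1 ?addr0; last first.
    by move=> c cb; rewrite (negbTE cb) mulr0.
  by rewrite eqxx mulr1 rhoE mulrAC /uu expiJ expiD subrr expi0 mul1r.
set q := (1 - F) / (2 ^+ (d * n) - 1).
have hD : forall b : cbasis d n, depol_ghz F b b = q%:C + (F - q)%:C * ghz_proj R b b.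
  move=> b; rewrite /depol_ghz /opadd /opscale /opid eqxx rmorphB /= -/q; ring.
under eq_bigr do rewrite hD.
rewrite big_split /= sumr_const -big_distrr /=.
rewrite (@sum_two _ _ z o zo); last first.
  move=> b bz bo; rewrite /ghz_proj ghzE.
  by rewrite (negbTE bz) (negbTE bo) mul0r.
rewrite /ghz_proj !ghzE !eqxx /= !orbT ss card_cb.
rewrite -!rmorphD -rmorphMn -rmorphM -rmorphD /=.
rewrite -mulr_natr natrX /q; by field.
Qed.


Lemma SS_line (t : R) : SS (t *: v1 R d) = t * ((d * n)%:R / Num.sqrt d%:R).
Proof.
rewrite /SS (eq_bigr (fun _ => t * (Num.sqrt d%:R)^-1)) => [|q _]; last by rewrite !mxE.
by rewrite sumr_const card_qubit -mulr_natr; ring.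
Qed.

Lemma SS0 : SS 0 = 0.
Proof. by rewrite /SS big1 // => q _; rewrite mxE. Qed.

End S.

Local Close Scope complex_scope.
Local Open Scope classical_set_scope.
Section T.
Variable R : realType.

Lemma lin_der (A k x : R) : is_derive x 1 (fun t : R => A - t * k) (- k).
Proof.
have h1 : is_derive x 1 (fun t : R => t * k) k.
  have := is_deriveM (f := @id R) (g := cst k) (x := x) (v := 1) (df := 1) (dg := 0).
  move=> H.
  have H' := H (is_derive_id _ _) (is_derive_cst _ _ _).
  have -> : (fun t : R => t * k) = (id * cst k) :> (R -> R) by apply/funext.
  apply: is_derive_eq H' _.
  by rewrite scaler0 add0r /GRing.scale /= mulr1.
have := is_deriveB (f := cst A) (g := fun t : R => t * k) (x := x) (v := 1) (df := 0) (dg := k).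
rewrite sub0r => H; exact: H.
Qed.

Lemma cos_lin (c A k : R) :
  derivable (fun t : R => c * cos (A - t * k)) 0 1 /\
  derive1 (fun t : R => c * cos (A - t * k)) 0 = c * (k * sin A).
Proof.
have dl : derivable (fun t : R => A - t * k) 0 1 by apply: ex_derive; apply: lin_der.
have dc : derivable (@cos R) (A - 0 * k) 1 by apply: derivable_cos.
have dg : derivable (@cos R \o (fun t : R => A - t * k)) 0 1.
  apply/derivable1_diffP; apply: differentiable_comp; exact/derivable1_diffP.
have dd : derive1 (@cos R \o (fun t : R => A - t * k)) 0 = k * sin A.
  rewrite derive1_comp // !derive1E !derive_val mul0r subr0 scaler0 add0r /GRing.scale /= mulr1 add0r mul1r; ring.
split.
  have := @derivableZ R R R (@cos R \o (fun t : R => A - t * k)) c 0 1 dg.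
  by [].
rewrite derive1E.
have := @deriveZ R R R (@cos R \o (fun t : R => A - t * k)) c 0 1 dg.
rewrite /= => ->; rewrite -derive1E dd; done.
Qed.

Lemma sin_natpi (m : nat) : sin (m%:R * pi) = 0 :> R.
Proof.
elim: m => [|m IH]; first by rewrite mul0r sin0.
by rewrite -natr1 mulrDl mul1r sinDpi IH oppr0.
Qed.

Lemma sin_intpi (l : int) : sin (l%:~R * pi) = 0 :> R.
Proof.
case: l => m; first by rewrite -pmulrn sin_natpi.
by rewrite NegzE mulrNz mulNr sinN -pmulrn sin_natpi oppr0.
Qed.

Lemma cos_natpi (m : nat) (x : R) : `|cos (x + m%:R * pi)| = `|cos x|.
Proof.
elim: m => [|m IH]; first by rewrite mul0r addr0.
by rewrite -natr1 mulrDl mul1r addrA cosDpi normrN IH.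
Qed.

Lemma cos_intpi (l : int) (x : R) : `|cos (x + l%:~R * pi)| = `|cos x|.
Proof.
case: l => m; first by rewrite -pmulrn cos_natpi.
rewrite NegzE mulrNz mulNr -pmulrn.
set y := x - _.
by rewrite -(cos_natpi m.+1 y) /y subrK.
Qed.

Lemma cos_eq0 (x : R) : cos x = 0 <-> exists l : int, x = (2 * l%:~R + 1) * pi / 2.
Proof.
split; last first.
  move=> [l ->].
  have -> : (2 * l%:~R + 1) * pi / 2 = l%:~R * pi + pi / 2 :> R by field.
  by rewrite cosDpihalf sin_intpi oppr0.
move=> cx.
set m := Num.floor (x / pi).
have hp := pi_gt0 R.
have h1 : m%:~R <= x / pi by apply: Num.Theory.floor_le.
have h2 : x / pi < (m + 1)%:~R by apply: Num.Theory.floorD1_gt.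
rewrite intrD in h2.
have h1' : m%:~R * pi <= x by rewrite -ler_pdivlMr.
have h2' : x < (m%:~R + 1) * pi by rewrite -ltr_pdivrMr.
set y := x - m%:~R * pi.
have cy : cos y = 0.
  apply/eqP; rewrite -normr_eq0 -(cos_intpi m y) /y subrK cx normr0 //.
have ey : y = pi / 2.
  apply: cos_inj; last by rewrite cy cos_pihalf.
  - by rewrite in_itv /=; apply/andP; split; rewrite /y; lra.
  - by rewrite in_itv /=; apply/andP; split; lra.
exists m; rewrite -[x](subrK (m%:~R * pi)) -/y ey; by field.
Qed.


Lemma final_alg (d : nat) (A F : R) : (2 <= d)%N -> d%:R + 1 <= A -> 0 <= F -> F <= 1 ->
  (1 < d%:R * (F - (1 - F) / (A - 1)) ^+ 2 <->
   (A + Num.sqrt d%:R - 1) / (A * Num.sqrt d%:R) < F).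
Proof.
move=> d2 hA F0 F1.
have d2r : 2 <= d%:R :> R by rewrite (ler_nat R 2 d).
set s := Num.sqrt d%:R.
have sp : 0 < s by rewrite sqrtr_gt0; lra.
have s2 : s ^+ 2 = d%:R by rewrite sqr_sqrtr //; lra.
have sA : s < A - 1.
  have h : s ^+ 2 < (A - 1) ^+ 2 by rewrite s2; nra.
  rewrite -(@ltr_pXn2r _ 2) // ?nnegrE; lra.
set c := F - (1 - F) / (A - 1).
have hc : c * (A - 1) = F * A - 1 by rewrite /c; field; lra.
have hsc : -1 < s * c.
  have h : s * c * (A - 1) > - (A - 1).
    rewrite -mulrA hc; have h0 : 0 <= s * (F * A) by apply: mulr_ge0; nra.
    nra.
  have hA1 : 0 < A - 1 by lra.
  rewrite -(ltr_pM2r hA1) mulN1r; exact: h.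
have -> : d%:R * c ^+ 2 = (s * c) ^+ 2 by rewrite exprMn s2.
have -> : (1 < (s * c) ^+ 2) <-> (1 < s * c) by split; nra.
rewrite ltr_pdivrMr; last by nra.
split => h; nra.
Qed.

End T.

Theorem mainTheorem6 (R : realType) (d n : nat) (F : R) :
  (2 <= d)%N -> (1 <= n)%N ->
  0 <= F -> F < 1 -> F != (2 ^+ (n * d))^-1 ->
  let N := (n * d)%N in
  let c := cF N F in
  (forall a : R, derivable (expM_line d n F a) 0 1) /\
  (forall a : R, denomV d n F a != 0 <-> sin (N%:R * a) != 0) /\
  (forall a : R, sin (N%:R * a) != 0 ->
     Verr d n F a = (1 - c ^+ 2 * cos (N%:R * a) ^+ 2)
                  / (d%:R * n%:R ^+ 2 * c ^+ 2 * sin (N%:R * a) ^+ 2)) /\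
  (forall a : R, denomV d n F a != 0 -> (d%:R * c ^+ 2 * n%:R ^+ 2)^-1 <= Verr d n F a) /\
  (forall a : R, (denomV d n F a != 0 /\ Verr d n F a = (d%:R * c ^+ 2 * n%:R ^+ 2)^-1)
     <-> exists l : int, a = (2 * l%:~R + 1) * pi / (2 * N%:R)) /\
  (forall F' : R, 0 <= F' -> F' <= 1 ->
     (1 < d%:R * (cF N F') ^+ 2 <->
      (2 ^+ N + Num.sqrt d%:R - 1) / (2 ^+ N * Num.sqrt d%:R) < F')).
Proof.
move=> d2 n1 F0 F1 Fne N c.
have d0 : (0 < d)%N by apply: leq_trans d2.
have n0 : (0 < n)%N by [].
have dr : 0 < d%:R :> R by rewrite ltr0n.
have nr : 0 < n%:R :> R by rewrite ltr0n.
have d2r : 2 <= d%:R :> R by rewrite (ler_nat R 2 d).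
set A : R := 2 ^+ N.
have NA : d%:R + 1 <= A.
  rewrite /A -natrX natr1 ler_nat.
  apply: leq_trans (ltn_expl d (isT : (1 < 2)%N)) _.
  by rewrite leq_pexp2l // /N leq_pmull.
have A1 : 2 ^+ (d * n) - 1 != 0 :> R by rewrite mulnC -/N -/A; apply/eqP; lra.
have hcc : cc R d n F = c by rewrite /cc /c /cF /N mulnC.
have hc : c * (A - 1) = F * A - 1 by rewrite /c /cF -/A; field; lra.
have c0 : c != 0.
  apply/eqP => c0; move: hc; rewrite c0 mul0r => /eqP; rewrite eq_sym subr_eq0 => /eqP hFA.
  move/eqP: Fne; apply; rewrite -/N -/A -[A^-1]mul1r -hFA mulfK //; apply/eqP; lra.
have c1 : c ^+ 2 < 1.
  have hA1 : 0 < A - 1 by lra.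
  have cl : c < 1 by rewrite -(ltr_pM2r hA1) hc mul1r; nra.
  have cg : -1 < c by rewrite -(ltr_pM2r hA1) hc mulN1r; nra.
  rewrite expr2; nra.
set Nr : R := N%:R.
have hNr : (d * n)%:R = Nr by rewrite /Nr /N mulnC.
have Nr0 : 0 < Nr by rewrite /Nr /N natrM; apply: mulr_gt0.
set kk : R := Nr / Num.sqrt d%:R.
have sd : 0 < Num.sqrt d%:R :> R by rewrite sqrtr_gt0.
have kk0 : kk != 0 by rewrite /kk; apply/eqP => h; move: h; apply/eqP; rewrite mulf_neq0 // ?invr_eq0; apply/eqP; lra.
have kk2 : kk ^+ 2 = d%:R * n%:R ^+ 2.
  by rewrite /kk expr_div_n sqr_sqrtr ?ler0n // /Nr /N natrM; field; apply/eqP; lra.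
have lineE : forall a, expM_line d n F a = fun t => c * cos (Nr * a - t * kk).
  move=> a; apply/funext => t.
  by rewrite /expM_line (@expectM R d n d0 n0) hcc SS_line hNr.
have denomE : forall a, denomV d n F a = (c * (kk * sin (Nr * a))) ^+ 2.
  by move=> a; rewrite /denomV lineE (@cos_lin R c (Nr * a) kk).2.
have denom_ne : forall a, denomV d n F a != 0 <-> sin (Nr * a) != 0.
  move=> a; rewrite denomE sqrf_eq0 mulf_eq0 (negbTE c0) /= mulf_eq0 (negbTE kk0) /=; done.
have hV : forall a, Verr d n F a = (1 - c ^+ 2 * cos (Nr * a) ^+ 2) / (c * (kk * sin (Nr * a))) ^+ 2.
  move=> a; rewrite /Verr (@expectMM R d n d0 n0) // (@expectM R d n d0 n0) SS0 subr0 hcc hNr denomE.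
  by rewrite exprMn.
have hV2 : forall a, sin (Nr * a) != 0 ->
  Verr d n F a = (1 - c ^+ 2 * cos (Nr * a) ^+ 2) / (d%:R * n%:R ^+ 2 * c ^+ 2 * sin (Nr * a) ^+ 2).
  by move=> a sa; rewrite hV exprMn [(kk * _) ^+ 2]exprMn kk2; congr (_ / _); ring.
have key : forall a, sin (Nr * a) != 0 ->
  Verr d n F a - (d%:R * c ^+ 2 * n%:R ^+ 2)^-1 =
  cos (Nr * a) ^+ 2 * (1 - c ^+ 2) / (d%:R * n%:R ^+ 2 * c ^+ 2 * sin (Nr * a) ^+ 2).
  move=> a sa; rewrite hV2 //; have s2 := sin2cos2 (Nr * a).
  have s20 : sin (Nr * a) ^+ 2 != 0 by rewrite sqrf_eq0.
  rewrite s2 in s20 *; field.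
  by rewrite s20 c0 /=; apply/andP; split; apply/eqP; lra.
have Dpos : forall a, sin (Nr * a) != 0 -> 0 < d%:R * n%:R ^+ 2 * c ^+ 2 * sin (Nr * a) ^+ 2.
  move=> a sa; have hsq : forall y : R, y != 0 -> 0 < y ^+ 2 by move=> y y0; rewrite lt_neqAle sqr_ge0 andbT eq_sym sqrf_eq0.
  apply: mulr_gt0; last exact: hsq.
  apply: mulr_gt0; last exact: hsq.
  by apply: mulr_gt0 => //; apply: hsq; apply/eqP; lra.
have cosE : forall a, cos (Nr * a) = 0 <-> exists l : int, a = (2 * l%:~R + 1) * pi / (2 * Nr).
  move=> a; rewrite cos_eq0; split => -[l hl]; exists l.
    by rewrite -[a](mulKf (lt0r_neq0 Nr0)) hl; field; apply/eqP; lra.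
  by rewrite hl; field; apply/eqP; lra.
split; first by move=> a; rewrite lineE; exact: (@cos_lin R c (Nr * a) kk).1.
split; first exact: denom_ne.
split; first exact: hV2.
split.
  move=> a /denom_ne sa; rewrite -subr_ge0 key //.
  apply: divr_ge0; last exact: ltW (Dpos a sa).
  apply: mulr_ge0; first exact: sqr_ge0.
  by rewrite subr_ge0 ltW.
split.
  move=> a; split.
    move=> [/denom_ne sa /eqP]; rewrite -subr_eq0 key // mulf_eq0 invr_eq0 (gt_eqF (Dpos a sa)) orbF.
    rewrite mulf_eq0 sqrf_eq0 subr_eq0 => /orP [/eqP hc0|/eqP h1]; last by move: c1; rewrite -h1 ltxx.
    by apply/cosE.
  move=> /cosE ca.
  have sa : sin (Nr * a) != 0.
    by apply/eqP => h; move: (cos2Dsin2 (Nr * a)); rewrite ca h expr0n /= addr0 => /eqP; rewrite eq_sym oner_eq0.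
  split; first exact/denom_ne.
  by apply/eqP; rewrite -subr_eq0 key // ca expr0n /= !mul0r.
move=> F' F'0 F'1; rewrite /cF -/A; exact: (@final_alg R d A F').
Qed.
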